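(* Let the initial shared state be the two-qutrit Bell-diagonal state of a qutrit depolarizing channel with parameter $p=p_{00}>1/3$, i.e. Bell probabilities $q_{00}=p$ and $q_{nm}=(1-p)/8$ for $(n,m)\ne(0,0)$. Then the mCAEPP with $m$ carriers per round, conditioned on successful post-selection in every round, purifies the shared state to unit asymptotic fidelity: the fidelity $q_{00}$ of the accepted state tends to $1$ in the limit of many rounds and a large number $m$ of carriers per round.
   Context: Bell-diagonal two-qutrit states are described by probabilities $q=(q_{st})_{s,t\in\{0,1,2\}}$ on the Bell states $|\Phi^{s,t}\rangle=\frac1{\sqrt3}\sum_j e^{2\pi i tj/3}|j,(j+s)\bmod3\rangle$; the fidelity is $q_{00}$. One round of the mCAEPP with $m$ carriers (built from the stabilizer generators $X_1X_m^2,\dots,X_{m-1}X_m^2,Z_0Z_1\cdots Z_m$) acts on $q$ as follows. Pre-processing by local unitaries relabels the probabilities to $r=(r_{00},r_{01},r_{02},r_{10},r_{11},r_{12},r_{20},r_{21},r_{22})=(q_{00},q_{21},q_{22},q_{10},q_{11},q_{12},q_{20},q_{01},q_{02})$. Random error labels $(x_0,z_0)$ with $P(x_0=i,z_0=j)=r_{ij}$ (shared pair) and independent i.i.d. $(x_k,z_k)$, $k=1,\dots,m$ (carriers, passing through the same depolarizing channel) with $P(x_k=0,z_k=0)=p$ and $P(x_k=i,z_k=j)=(1-p)/8$ otherwise, all in $\{0,1,2\}$. The round succeeds iff $z_i\equiv z_m \pmod 3$ for $i=1,\dots,m-1$ and $\sum_{j=0}^m x_j\equiv0\pmod3$; the output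 Bell label is $(s,t)=(x_0,(z_0-z_1)\bmod 3)$, and the new distribution is $q'_{st}=P(\text{success},s,t)/P(\text{success})$. Rounds are iterated on the accepted state. *)

(* Defs.v *)
From mathcomp Require Import all_boot all_order all_algebra.
From mathcomp Require Import reals.
Set Implicit Arguments. Unset Strict Implicit. Unset Printing Implicit Defensive.
Import Order.TTheory GRing.Theory Num.Theory.
Local Open Scope ring_scope.

Section MCAEPP.
Variable R : realType.

(* Bell labels (s,t), s,t in {0,1,2}; a Bell-diagonal state is q : lbl -> lbl -> R,
   q s t = q_{st}; the fidelity is q 0 0. *)
Definition lbl := 'I_3.

Definition depol (p : R) (s t : lbl) : R :=
  if ((s : nat) == 0%N) && ((t : nat) == 0%N) then p else (1 - p) / 8.

(* Pre-processing relabelling: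
   (r00,r01,r02,r10,r11,r12,r20,r21,r22) = (q00,q21,q22,q10,q11,q12,q20,q01,q02). *)
Definition relabel (q : lbl -> lbl -> R) (s t : lbl) : R :=
  if (t : nat) == 0%N then q s t
  else if (s : nat) == 0%N then q (inord 2) t
  else if (s : nat) == 2%N then q (inord 0) t
  else q s t.

Definition carrier (p : R) (e : lbl * lbl) : R :=
  if ((e.1 : nat) == 0%N) && ((e.2 : nat) == 0%N) then p else (1 - p) / 8.

Definition success (m : nat) (x0 : lbl) (c : m.-tuple (lbl * lbl)) : bool :=
  all (fun e : lbl * lbl => e.2 == (last (x0, x0) c).2) c &&
  ((x0 + sumn (map (fun e : lbl * lbl => (e.1 : nat)) c)) %% 3 == 0)%N.

Definition out_t (m : nat) (z0 : lbl) (c : m.-tuple (lbl * lbl)) : nat :=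
  ((z0 + 3 - (nth (z0, z0) c 0).2) %% 3)%N.

(* P(success, s, t) for one round with m carriers. *)
Definition joint (p : R) (m : nat) (q : lbl -> lbl -> R) (s t : lbl) : R :=
  \sum_(x0 : lbl) \sum_(z0 : lbl) \sum_(c : m.-tuple (lbl * lbl))
     relabel q x0 z0 * \prod_(e <- c) carrier p e *
     ((success x0 c && (x0 == s) && (out_t z0 c == (t : nat)))%:R).

Definition psucc (p : R) (m : nat) (q : lbl -> lbl -> R) : R :=
  \sum_(s : lbl) \sum_(t : lbl) joint p m q s t.

Definition mcaepp_round (p : R) (m : nat) (q : lbl -> lbl -> R) (s t : lbl) : R :=
  joint p m q s t / psucc p m q.

Definition state_after (p : R) (m n : nat) : lbl -> lbl -> R :=
  iter n (mcaepp_round p m) (depol p).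

Definition fidelity (q : lbl -> lbl -> R) : R := q (inord 0) (inord 0).

End MCAEPP.

(* Main.v *)
Require Import Defs.
From mathcomp Require Import all_boot all_order all_algebra.
From mathcomp Require Import reals ring lra.
Set Implicit Arguments. Unset Strict Implicit. Unset Printing Implicit Defensive.
Import Order.TTheory GRing.Theory Num.Theory.
Local Open Scope ring_scope.

Section S.
Variable R : realType.

Lemma sum_tuple_cons (T : finType) (k : nat) (F : k.+1.-tuple T -> R) :
  \sum_(c : k.+1.-tuple T) F c = \sum_(e : T) \sum_(c : k.-tuple T) F [tuple of e :: c].
Proof.
rewrite pair_big /=.
rewrite (reindex (fun x : T * k.-tuple T => [tuple of x.1 :: x.2])) /=.
  by apply: eq_bigr => -[e c].
exists (fun c : k.+1.-tuple T => (thead c, [tuple of behead c])).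
  by move=> [e c] _ /=; congr pair; apply: val_inj.
by move=> c _; apply: val_inj => /=; case/tupleP: c => e c.
Qed.

Definition i0 : lbl := @Ordinal 3 0 isT.
Definition i1 : lbl := @Ordinal 3 1 isT.
Definition i2 : lbl := @Ordinal 3 2 isT.

Lemma sum3 (F : lbl -> R) : \sum_(i : lbl) F i = F i0 + F i1 + F i2.
Proof.
rewrite !big_ord_recr big_ord0 /= add0r.
by congr (F _ + F _ + F _); apply: val_inj.
Qed.


Variable p : R.
Notation a := ((1 - p) / 8).
Notation T := (lbl * lbl)%type.

Definition sc (r : nat) (c : seq T) : bool :=
  ((r + sumn (map (fun e : T => (e.1 : nat)) c)) %% 3 == 0)%N.

Definition h (m : nat) (z : lbl) (r : nat) : R :=
  \sum_(c : m.-tuple T) \prod_(e <- c) carrier p e *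
     ((all (fun e : T => e.2 == z) c && sc r c)%:R).

Lemma h_rec m z r : h m.+1 z r =
  \sum_(e : T) carrier p e * (e.2 == z)%:R * h m z (r + e.1).
Proof.
rewrite /h sum_tuple_cons; apply: eq_bigr => e _.
rewrite mulr_sumr; apply: eq_bigr => c _ /=.
rewrite big_cons /sc /= addnA.
case: (e.2 == z) => /=; rewrite ?mulr1 ?mulr0 ?mul0r ?mulr0 ?andbF //; ring.
Qed.

Lemma h0 z r : h 0 z r = ((r %% 3 == 0)%N)%:R.
Proof.
rewrite /h (big_pred1 [tuple]) /=; last first.
  by move=> c /=; apply/esym/eqP; exact: tuple0.
by rewrite big_nil mul1r /sc /= addn0.
Qed.


Lemma sumT (F : T -> R) : \sum_(e : T) F e = \sum_(x : lbl) \sum_(z : lbl) F (x, z).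
Proof. by rewrite pair_big; apply: eq_bigr => -[]. Qed.

Lemma sum_pick (F : lbl -> R) z : \sum_(z' : lbl) F z' * (z' == z)%:R = F z.
Proof.
rewrite (bigD1 z) //= eqxx mulr1 big1 ?addr0 // => z' /negbTE ->.
by rewrite mulr0.
Qed.

Lemma h_rec2 m z r : h m.+1 z r =
  \sum_(x : lbl) carrier p (x, z) * h m z (r + x).
Proof.
rewrite h_rec sumT; apply: eq_bigr => x _ /=.
rewrite -(sum_pick (fun z' => carrier p (x, z') * h m z (r + x)) z).
by apply: eq_bigr => z' _ /=; ring.
Qed.

Lemma mod3_cases r : (r %% 3 = 0 \/ r %% 3 = 1 \/ r %% 3 = 2)%N.
Proof.
have : (r %% 3 < 3)%N by rewrite ltn_mod.
by case: (r %% 3)%N => [|[|[|]]]; auto.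
Qed.

Lemma modD3 r x : ((r + x) %% 3 = (r %% 3 + x) %% 3)%N.
Proof. by rewrite modnDml. Qed.

Lemma Hs_nz m (z : lbl) r : (z : nat) != 0%N ->
  \sum_(x : lbl) h m z (r + x) = (3 * a) ^+ m.
Proof.
move=> hz; elim: m r => [|m IH] r.
  rewrite sum3 !h0 /= !(modD3 r).
  by case: (mod3_cases r) => [->|[->|->]] /=; rewrite ?addr0 ?add0r.
under eq_bigr => x _ do rewrite h_rec2.
have ca x : carrier p (x, z) = a by rewrite /carrier /= (negbTE hz) andbF.
under eq_bigr => x _ do under eq_bigr => y _ do rewrite ca.
under eq_bigr => x _ do rewrite -mulr_sumr IH.

by rewrite sumr_const card_ord exprS; ring.
Qed.

Lemma h_nz k (z : lbl) r : (z : nat) != 0%N -> h k.+1 z r = a * (3 * a) ^+ k.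
Proof.
move=> hz; rewrite h_rec2.
have ca x : carrier p (x, z) = a by rewrite /carrier /= (negbTE hz) andbF.
under eq_bigr => x _ do rewrite ca.
by rewrite -mulr_sumr Hs_nz.
Qed.

Definition gcl m (r : nat) : R :=
  if (r %% 3 == 0)%N then ((p + 2 * a) ^+ m + 2 * (p - a) ^+ m) / 3
  else ((p + 2 * a) ^+ m - (p - a) ^+ m) / 3.

Lemma h_z m r : h m i0 r = gcl m r.
Proof.
elim: m r => [|m IH] r.
  rewrite h0 /gcl !expr0.
  by case: (r %% 3 == 0)%N => /=; field.
rewrite h_rec2 sum3 !IH /gcl /= !(modD3 r) !addn0 /carrier /=.
case: (mod3_cases r) => [->|[->|->]] /=; rewrite !exprS; field.
all: by [].
Qed.


Lemma sum_pick_l (F : lbl -> R) z : \sum_(z' : lbl) (z' == z)%:R * F z' = F z.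
Proof. rewrite -[RHS](sum_pick F z); apply: eq_bigr => ? _; exact: mulrC. Qed.

Lemma ind_split k x0 z0 (t : lbl) (c : k.+1.-tuple T) :
  ((success x0 c && (out_t z0 c == t))%:R : R) =
  \sum_(z : lbl) ((((z0 + 3 - z) %% 3)%N == t)%:R * (all (fun e : T => e.2 == z) c && sc x0 c)%:R).
Proof.
case/tupleP: c => e c.
rewrite (bigD1 e.2) //= big1 ?addr0; last first.
  by move=> z hz; rewrite [e.2 == z]eq_sym (negbTE hz) /= mulr0.
rewrite eqxx /= /success /out_t /sc /=.
set L := last e c.
have -> : ((e.2 == L.2) && all (fun f : T => f.2 == L.2) c) = all (fun f : T => f.2 == e.2) c.
  case H: (e.2 == L.2).
    by rewrite (eqP H).
  have hL : L \in e :: c by rewrite mem_last.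
  apply/esym/negbTE/negP => /allP A.
  move: hL; rewrite inE => /orP [/eqP hL|/A hL].
    by rewrite -hL eqxx in H.
  by rewrite eq_sym hL in H.
by rewrite mulrC -natrM mulnb.
Qed.


Lemma joint_cf k (q : lbl -> lbl -> R) (s t : lbl) : joint p k.+1 q s t =
  \sum_(z0 : lbl) relabel q s z0 *
     \sum_(z : lbl) ((((z0 + 3 - z) %% 3)%N == t)%:R * h k.+1 z s).
Proof.
rewrite /joint.
have E x0 z0 (c : k.+1.-tuple T) :
  relabel q x0 z0 * \prod_(e <- c) carrier p e *
     ((success x0 c && (x0 == s) && (out_t z0 c == t))%:R) =
  (x0 == s)%:R * (relabel q x0 z0 * \sum_(z : lbl) ((((z0 + 3 - z) %% 3)%N == t)%:R *
       (\prod_(e <- c) carrier p e * (all (fun e : T => e.2 == z) c && sc x0 c)%:R))).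
  have -> : success x0 c && (x0 == s) && (out_t z0 c == t) =
            (x0 == s) && (success x0 c && (out_t z0 c == t)).
    by case: (x0 == s); rewrite ?andbT ?andbF.
  rewrite -mulnb natrM ind_split mulr_sumr mulr_sumr mulr_sumr.
  rewrite mulr_sumr; apply: eq_bigr => z _; ring.
under eq_bigr => x0 _ do under eq_bigr => z0 _ do under eq_bigr => c _ do rewrite E.
under eq_bigr => x0 _ do under eq_bigr => z0 _ do rewrite -mulr_sumr.
under eq_bigr => x0 _ do rewrite -mulr_sumr.
rewrite sum_pick_l; apply: eq_bigr => z0 _.
rewrite -mulr_sumr; congr (_ * _).
rewrite exchange_big; apply: eq_bigr => z _.
by rewrite -mulr_sumr /h.
Qed.


Lemma inord0 : inord 0 = i0 :> lbl. Proof. by apply: val_inj; rewrite /= inordK. Qed.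
Lemma inord2 : inord 2 = i2 :> lbl. Proof. by apply: val_inj; rewrite /= inordK. Qed.

Definition cc k := a * (3 * a) ^+ k.

Lemma gcl2 m : gcl m 2 = gcl m 1. Proof. by []. Qed.

Lemma j00 k q : joint p k.+1 q i0 i0 = gcl k.+1 0 * q i0 i0 + cc k * (q i2 i1 + q i2 i2).
Proof. rewrite joint_cf !sum3 !h_z !h_nz //= /relabel /= ?inord0 ?inord2 ?gcl2 /cc; ring. Qed.

Lemma j01 k q : joint p k.+1 q i0 i1 = gcl k.+1 0 * q i2 i1 + cc k * (q i2 i2 + q i0 i0).
Proof. rewrite joint_cf !sum3 !h_z !h_nz //= /relabel /= ?inord0 ?inord2 ?gcl2 /cc; ring. Qed.

Lemma j02 k q : joint p k.+1 q i0 i2 = gcl k.+1 0 * q i2 i2 + cc k * (q i0 i0 + q i2 i1).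
Proof. rewrite joint_cf !sum3 !h_z !h_nz //= /relabel /= ?inord0 ?inord2 ?gcl2 /cc; ring. Qed.

Lemma j10 k q : joint p k.+1 q i1 i0 = gcl k.+1 1 * q i1 i0 + cc k * (q i1 i1 + q i1 i2).
Proof. rewrite joint_cf !sum3 !h_z !h_nz //= /relabel /= ?inord0 ?inord2 ?gcl2 /cc; ring. Qed.

Lemma j11 k q : joint p k.+1 q i1 i1 = gcl k.+1 1 * q i1 i1 + cc k * (q i1 i2 + q i1 i0).
Proof. rewrite joint_cf !sum3 !h_z !h_nz //= /relabel /= ?inord0 ?inord2 ?gcl2 /cc; ring. Qed.

Lemma j12 k q : joint p k.+1 q i1 i2 = gcl k.+1 1 * q i1 i2 + cc k * (q i1 i0 + q i1 i1).
Proof. rewrite joint_cf !sum3 !h_z !h_nz //= /relabel /= ?inord0 ?inord2 ?gcl2 /cc; ring. Qed.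

Lemma j20 k q : joint p k.+1 q i2 i0 = gcl k.+1 1 * q i2 i0 + cc k * (q i0 i1 + q i0 i2).
Proof. rewrite joint_cf !sum3 !h_z !h_nz //= /relabel /= ?inord0 ?inord2 ?gcl2 /cc; ring. Qed.

Lemma j21 k q : joint p k.+1 q i2 i1 = gcl k.+1 1 * q i0 i1 + cc k * (q i0 i2 + q i2 i0).
Proof. rewrite joint_cf !sum3 !h_z !h_nz //= /relabel /= ?inord0 ?inord2 ?gcl2 /cc; ring. Qed.

Lemma j22 k q : joint p k.+1 q i2 i2 = gcl k.+1 1 * q i0 i2 + cc k * (q i2 i0 + q i0 i1).
Proof. rewrite joint_cf !sum3 !h_z !h_nz //= /relabel /= ?inord0 ?inord2 ?gcl2 /cc; ring. Qed.


Lemma coef_ineqs (G0 G1 c : R) : 0 <= G1 -> G1 < G0 -> 0 <= c -> 8 * c <= G0 - G1 ->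
  [/\ 0 <= (G0 - (G0 - G1)/4) * (G0 + (G0 - G1)/2) - G0 * (G0 + c),
      0 <= (G0 - (G0 - G1)/4) * G0 - G0 * c - (G0 + (G0 - G1)/2) * (G1 + c),
      0 <= (G0 - (G0 - G1)/4) * G0 - G0 * G1 - 2 * c * (G0 + (G0 - G1)/2) &
      0 <= (G0 - (G0 - G1)/4) * G0 - G0 * (G1 + 2 * c)].
Proof.
move=> h1 h2 h3 h4; split; nra.
Qed.


Definition Psi (G0 G1 : R) (q : lbl -> lbl -> R) :=
  G0 * (q i0 i1 + q i0 i2 + q i2 i0 + q i1 i0 + q i1 i1 + q i1 i2) +
  (G0 + (G0 - G1) / 2) * (q i2 i1 + q i2 i2).

Definition tot (q : lbl -> lbl -> R) := \sum_(s : lbl) \sum_(t : lbl) q s t.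

Lemma carrier_ge0 e : 0 <= p <= 1 -> 0 <= carrier p e.
Proof. move=> /andP[h0 h1]; rewrite /carrier; case: ifP => _ //; lra. Qed.

Lemma joint_ge0 m q s t : 0 <= p <= 1 -> (forall s t, 0 <= q s t) -> 0 <= joint p m q s t.
Proof.
move=> hp hq; rewrite /joint.
apply: sumr_ge0 => x0 _; apply: sumr_ge0 => z0 _; apply: sumr_ge0 => c _.
apply: mulr_ge0; last exact: ler0n.
apply: mulr_ge0; last by apply: prodr_ge0 => e _; exact: carrier_ge0.
by rewrite /relabel; repeat case: ifP => _.
Qed.

Lemma psucc_eq k q : psucc p k.+1 q =
  joint p k.+1 q i0 i0 + joint p k.+1 q i0 i1 + joint p k.+1 q i0 i2 +
  (joint p k.+1 q i1 i0 + joint p k.+1 q i1 i1 + joint p k.+1 q i1 i2) +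
  (joint p k.+1 q i2 i0 + joint p k.+1 q i2 i1 + joint p k.+1 q i2 i2).
Proof. by rewrite /psucc !sum3. Qed.

Section Step.
Variable k : nat.
Notation G0 := (gcl k.+1 0).
Notation G1 := (gcl k.+1 1).
Notation c := (cc k).

Lemma step q K : 0 <= p <= 1 -> 0 <= G1 -> G1 < G0 -> 0 <= c -> 8 * c <= G0 - G1 ->
  (forall s t, 0 <= q s t) -> 0 < q i0 i0 -> 0 <= K -> Psi G0 G1 q <= K * q i0 i0 ->
  [/\ forall s t, 0 <= mcaepp_round p k.+1 q s t,
      0 < mcaepp_round p k.+1 q i0 i0,
      tot (mcaepp_round p k.+1 q) = 1 &
      Psi G0 G1 (mcaepp_round p k.+1 q) <=
        ((1 - (G0 - G1) / (4 * G0)) * K + 2 * c) * mcaepp_round p k.+1 q i0 i0].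
Proof.
move=> hp hG1 hG hc0 hc hq hu hK hPsi.
have hJ s t := joint_ge0 k.+1 s t hp hq.
have hJ00 : G0 * q i0 i0 <= joint p k.+1 q i0 i0.
  rewrite j00; have := hq i2 i1; have := hq i2 i2; nra.
have hG0 : 0 < G0 by lra.
have hP : 0 < psucc p k.+1 q.
  rewrite psucc_eq.
  have := hJ i0 i1; have := hJ i0 i2; have := hJ i1 i0; have := hJ i1 i1.
  have := hJ i1 i2; have := hJ i2 i0; have := hJ i2 i1; have := hJ i2 i2.
  have : 0 < G0 * q i0 i0 by apply: mulr_gt0.
  lra.
split.
- by move=> s t; rewrite /mcaepp_round; apply: divr_ge0 => //; apply: ltW.
- rewrite /mcaepp_round; apply: divr_gt0 => //.
  by apply: lt_le_trans hJ00; apply: mulr_gt0.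
- rewrite /tot /mcaepp_round.
  under eq_bigr => s _ do rewrite -mulr_suml.
  by rewrite -mulr_suml divff // gt_eqF.
rewrite /mcaepp_round.
set P := psucc p k.+1 q.
have -> : Psi G0 G1 (fun s t => joint p k.+1 q s t / P) = Psi G0 G1 (joint p k.+1 q) / P.
  by rewrite /Psi; ring.
rewrite mulrA ler_pM2r ?invr_gt0 //.
have [cV cY cw cX] := coef_ineqs hG1 hG hc0 hc.
have key : Psi G0 G1 (joint p k.+1 q) <=
   (G0 - (G0 - G1) / 4) * Psi G0 G1 q + 2 * c * G0 * q i0 i0.
  rewrite /Psi j01 j02 j10 j11 j12 j20 j21 j22 -subr_ge0.
  set V := q i2 i1 + q i2 i2.
  set Y := q i0 i1 + q i0 i2.
  set w := q i2 i0.
  set X := q i1 i0 + q i1 i1 + q i1 i2.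
  have hV : 0 <= V by rewrite /V; have := hq i2 i1; have := hq i2 i2; lra.
  have hY : 0 <= Y by rewrite /Y; have := hq i0 i1; have := hq i0 i2; lra.
  have hw : 0 <= w by exact: hq.
  have hX : 0 <= X by rewrite /X; have := hq i1 i0; have := hq i1 i1; have := hq i1 i2; lra.
  set C1 := (G0 - (G0 - G1)/4) * (G0 + (G0 - G1)/2) - G0 * (G0 + c) in cV.
  set C2 := (G0 - (G0 - G1)/4) * G0 - G0 * c - (G0 + (G0 - G1)/2) * (G1 + c) in cY.
  set C3 := (G0 - (G0 - G1)/4) * G0 - G0 * G1 - 2 * c * (G0 + (G0 - G1)/2) in cw.
  set C4 := (G0 - (G0 - G1)/4) * G0 - G0 * (G1 + 2 * c) in cX.
  have E : forall z : R, z = C1 * V + C2 * Y + C3 * w + C4 * X -> 0 <= z.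
    move=> z ->.
    by rewrite !addr_ge0 // mulr_ge0.
  apply: E.
  rewrite /C1 /C2 /C3 /C4 /V /Y /w /X; ring.
have hth : 0 <= (1 - (G0 - G1) / (4 * G0)) * K + 2 * c.
  apply: addr_ge0; last by lra.
  apply: mulr_ge0 => //.
  rewrite subr_ge0 ler_pdivrMr; last by lra.
  lra.
have E2 : (G0 - (G0 - G1) / 4) * K + 2 * c * G0 = ((1 - (G0 - G1) / (4 * G0)) * K + 2 * c) * G0.
  by field; rewrite gt_eqF.
apply: (le_trans key).
have hq0 : 0 <= q i0 i0 by exact: hq.
apply: (@le_trans _ _ ((((1 - (G0 - G1) / (4 * G0)) * K + 2 * c) * G0) * q i0 i0)).
  rewrite -E2.
  have hD4 : 0 <= G0 - (G0 - G1) / 4 by lra.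
  have := ler_wpM2l hD4 hPsi.
  nra.
by rewrite -mulrA; apply: ler_wpM2l.
Qed.

End Step.


Lemma bern (x : R) n : 0 <= x -> x <= 1 -> x ^+ n * (1 + n%:R * (1 - x)) <= 1.
Proof.
move=> h0 h1; elim: n => [|n IH]; first by rewrite expr0 mul0r addr0 mul1r.
have hX : 0 <= x ^+ n by apply: exprn_ge0.
have hX1 : x ^+ n.+1 <= 1 by apply: exprn_ile1.
move: hX1; rewrite exprS -natr1 => hX1.
set X := x ^+ n in IH hX hX1 *.
have : 0 <= x * (1 - (X * (1 + n%:R * (1 - x)))) by apply: mulr_ge0; lra.
have : 0 <= (1 - x) * (1 - x * X) by apply: mulr_ge0; lra.
nra.
Qed.

Lemma decay (x eta : R) : 0 <= x -> x < 1 -> 0 < eta ->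
  exists N : nat, forall n : nat, (N <= n)%N -> x ^+ n <= eta.
Proof.
move=> h0 h1 he.
have hy : 0 < (1 - x) * eta by apply: mulr_gt0; lra.
have hi : 0 <= ((1 - x) * eta)^-1 by rewrite invr_ge0 ltW.
have hb := archi_boundP hi.
exists (Num.bound ((1 - x) * eta)^-1) => n hn.
have hn' : ((1 - x) * eta)^-1 < n%:R.
  apply: (lt_le_trans hb); by rewrite ler_nat.
have hn2 : 1 < n%:R * ((1 - x) * eta).
  by rewrite -ltr_pdivrMr // div1r.
have hB := bern n h0 (ltW h1).
have hX : 0 <= x ^+ n by apply: exprn_ge0.
set X := x ^+ n in hB hX *.
have hn0 : 0 <= n%:R :> R by exact: ler0n.
set y := n%:R in hB hn2 hn' hn0 *.
rewrite leNgt; apply/negP => hXe.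
have : 0 < (X - eta) * (y * (1 - x)) by apply: mulr_gt0; nra.
nra.
Qed.


Lemma GD k : gcl k.+1 0 - gcl k.+1 1 = (p - a) ^+ k.+1.
Proof. by rewrite /gcl /=; field. Qed.

Lemma G1ge0 k : 1/3 < p -> p <= 1 -> 0 <= gcl k.+1 1.
Proof.
move=> h1 h2; rewrite /gcl /=.
apply: divr_ge0 => //; rewrite subr_ge0.
by apply: lerXn2r; rewrite ?nnegrE; lra.
Qed.

Lemma cc_eq k : 1/3 < p -> cc k = (a / (p - a)) * (3 * a / (p - a)) ^+ k * (p - a) ^+ k.+1.
Proof.
move=> h1; have hB : p - a != 0 by apply/eqP; lra.
rewrite /cc expr_div_n exprS; field.
rewrite expf_neq0 //=; apply/eqP; lra.
Qed.

Lemma depol_facts : 1/3 < p -> p <= 1 ->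
  [/\ forall s t, 0 <= depol p s t, depol p i0 i0 = p & tot (depol p) = 1].
Proof.
move=> h1 h2; split.
- by move=> s t; rewrite /depol; case: ifP => _; lra.
- by [].
- rewrite /tot !sum3 /depol /=; lra.
Qed.

Lemma fid_bound G0 G1 q K : 0 <= G1 -> G1 < G0 -> (forall s t, 0 <= q s t) ->
  tot q = 1 -> 0 <= K -> Psi G0 G1 q <= K * q i0 i0 -> G0 * (1 - q i0 i0) <= K.
Proof.
move=> hG1 hG hq ht hK hP.
move: ht hP; rewrite /tot !sum3 /Psi => ht hP.
have := hq i0 i0; have := hq i0 i1; have := hq i0 i2; have := hq i1 i0; have := hq i1 i1.
have := hq i1 i2; have := hq i2 i0; have := hq i2 i1; have := hq i2 i2.
move=> h22 h21 h20 h12 h11 h10 h02 h01 h00.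
have hu1 : q i0 i0 <= 1 by lra.
have : K * q i0 i0 <= K by rewrite -[leRHS]mulr1; apply: ler_wpM2l.
have : 0 <= (G0 - G1) / 2 * (q i2 i1 + q i2 i2) by apply: mulr_ge0; lra.
have -> : 1 - q i0 i0 = q i0 i1 + q i0 i2 + q i2 i0 + q i1 i0 + q i1 i1 + q i1 i2 + (q i2 i1 + q i2 i2) by lra.
nra.
Qed.

End S.

Lemma aux1 (R : realType) (x D : R) : 0 < D -> x <= 1/3 * (1/8) -> 8 * (x * D) <= D.
Proof. move=> h1 h2; have := ler_wpM2r (ltW h1) h2; lra. Qed.
Lemma aux2 (R : realType) (x D e : R) : 0 < D -> x <= 1/3 * (e / 8) -> 8 * (x * D) <= e / 3 * D.
Proof. move=> h1 h2; have := ler_wpM2r (ltW h1) h2; lra. Qed.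

Lemma final (R : realType) (G0 D K0 c eps t u : R) : 0 < G0 -> 0 < D -> 0 <= K0 -> 0 < eps ->
  0 <= t -> t <= eps * G0 / (2 * (K0 + 1)) -> 8 * c <= eps / 3 * D ->
  G0 * (1 - u) <= t * K0 + 8 * c * G0 / D -> 1 - eps < u.
Proof.
move=> hG hD hK he ht0 ht hc hf.
have h1 : t * K0 <= eps * G0 / (2 * (K0 + 1)) * K0 by apply: ler_wpM2r.
have hX : 0 <= eps * G0 / 2 by apply: divr_ge0; [apply: mulr_ge0; lra | lra].
have hk1 : K0 / (K0 + 1) <= 1 by rewrite ler_pdivrMr; lra.
have h2 : eps * G0 / (2 * (K0 + 1)) * K0 <= eps * G0 / 2.
  have -> : eps * G0 / (2 * (K0 + 1)) * K0 = eps * G0 / 2 * (K0 / (K0 + 1)) by field; lra.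
  by apply: ler_piMr.
have h3 : 8 * c * G0 / D <= eps / 3 * G0.
  have -> : 8 * c * G0 / D = (8 * c / D) * G0 by field; lra.
  apply: ler_wpM2r; first lra.
  by rewrite ler_pdivrMr.
have h4 : G0 * (1 - u) < G0 * eps by have := mulr_gt0 hG he; nra.
by move: h4; rewrite ltr_pM2l // => h; lra.
Qed.

Unset Implicit Arguments.

Theorem theorem1 (R : realType) (p : R) (hp : 1 / 3 < p) (hp1 : p <= 1) :
  forall eps : R, 0 < eps ->
  exists M : nat, forall m : nat, (M <= m)%N ->
  exists N : nat, forall n : nat, (N <= n)%N ->
    1 - eps < fidelity (state_after p m n).
Proof.
move=> eps he.
pose a := (1 - p) / 8; pose B := p - a; pose rho := 3 * a / B.
have hB : 0 < B by rewrite /B /a; lra.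
have ha : 0 <= a by rewrite /a; lra.
have hr0 : 0 <= rho by rewrite /rho; apply: divr_ge0 => //; lra.
have hr1 : rho < 1 by rewrite /rho ltr_pdivrMr // /B /a; lra.
have haB : a / B <= 1/3 by rewrite ler_pdivrMr // /B /a; lra.
have h18 : (0:R) < 1/8 by lra.
have [K1 hK1] := decay hr0 hr1 h18.
have he8 : 0 < eps / 8 by lra.
have [K2 hK2] := decay hr0 hr1 he8.
exists (maxn K1 K2).+1 => -[|k] //; rewrite ltnS geq_max => /andP[hk1 hk2].
have r1 := hK1 k hk1; have r2 := hK2 k hk2.
pose G0 := gcl p k.+1 0; pose G1 := gcl p k.+1 1; pose c := cc p k.
pose D := G0 - G1.
have hD : D = B ^+ k.+1 by rewrite /D /G0 /G1 GD.
have hDp : 0 < D by rewrite hD; apply: exprn_gt0.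
have hG1 : 0 <= G1 by apply: G1ge0.
have hG : G1 < G0 by rewrite -subr_gt0.
have hG0 : 0 < G0 by lra.
have hc : c = (a / B) * rho ^+ k * D by rewrite /c cc_eq // hD.
have haB0 : 0 <= a / B by apply: divr_ge0 => //; lra.
have hrk : 0 <= rho ^+ k by apply: exprn_ge0.
have hc0 : 0 <= c by rewrite hc; apply: mulr_ge0; [apply: mulr_ge0 | lra].
have hc8 : 8 * c <= D.
  rewrite hc; have : a / B * rho ^+ k <= 1/3 * (1/8) by apply: ler_pM.
  by move=> h; apply: aux1.
have hcE : 8 * c <= eps / 3 * D.
  rewrite hc; have : a / B * rho ^+ k <= 1/3 * (eps / 8) by apply: ler_pM.
  by move=> h; apply: aux2.
pose th := 1 - D / (4 * G0).
have hDle : D <= G0 by rewrite /D; lra.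
have hth0 : 0 <= th by rewrite /th subr_ge0 ler_pdivrMr; lra.
have hth1 : th < 1.
  rewrite /th; have : 0 < D / (4 * G0) by apply: divr_gt0; lra.
  lra.
have [hd0 hd00 hdt] := depol_facts hp hp1.
pose K0 := Psi G0 G1 (depol p) / p.
have hp0 : 0 < p by lra.
have hK0 : 0 <= K0.
  rewrite /K0 /Psi; apply: divr_ge0; last lra.
  apply: addr_ge0; apply: mulr_ge0; rewrite ?addr_ge0 //; lra.
pose Kn n := th ^+ n * K0 + 8 * c * G0 / D.
have hKn n : 0 <= Kn n.
  apply: addr_ge0; first by apply: mulr_ge0 => //; apply: exprn_ge0.
  by apply: divr_ge0 => //; [apply: mulr_ge0 => //; lra | lra].
have inv : forall n, let q := state_after p k.+1 n in
   [/\ forall s t, 0 <= q s t, 0 < q i0 i0, tot q = 1 & Psi G0 G1 q <= Kn n * q i0 i0].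
  elim=> [|n IH] /=.
    apply: And4 => //.
    rewrite hd00 /Kn expr0 mul1r mulrDl /K0 divfK ?gt_eqF //.
    rewrite lerDl; apply: mulr_ge0; last lra.
    apply: divr_ge0; [apply: mulr_ge0; lra | lra].
  case: IH => hq hu ht hP.
  have hp01 : 0 <= p <= 1 by apply/andP; split; lra.
  have [h1 h2 h3 h4] := step hp01 hG1 hG hc0 hc8 hq hu (hKn n) hP.
  apply: And4 => //.
  suff -> : Kn n.+1 = (1 - (G0 - G1) / (4 * G0)) * Kn n + 2 * cc p k by [].
  rewrite /Kn /th /D exprS -/c; field.
  by rewrite !gt_eqF.
have heta : 0 < eps * G0 / (2 * (K0 + 1)).
  by apply: divr_gt0; [apply: mulr_gt0 | lra].
have [N hN] := decay hth0 hth1 heta.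
exists N => n hn.
have [hq hu ht hP] := inv n.
have hf := fid_bound hG1 hG hq ht (hKn n) hP.
rewrite /fidelity inord0.
have htn := hN n hn.
have htn0 : 0 <= th ^+ n by apply: exprn_ge0.
move: hf; rewrite /Kn.
by apply: final.
Qed.
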